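(* Let $M$ be a multiplicity free object of a nonzero finite abelian category $\mathcal C$ over $\mathbb F$, and $\sigma\in\mathrm{JH}(M)$. If $d^M_{\mathrm{rad}}(\sigma)>0$, there is $\sigma'\in\mathrm{JH}(M)$ with $d^M_{\mathrm{rad}}(\sigma')=d^M_{\mathrm{rad}}(\sigma)-1$ such that $\sigma'$ $\mathrm{rad}$-points to $\sigma$. Likewise, if $d_M^{\mathrm{soc}}(\sigma)>0$, there is $\sigma'\in\mathrm{JH}(M)$ with $d_M^{\mathrm{soc}}(\sigma')=d_M^{\mathrm{soc}}(\sigma)-1$ such that $\sigma$ $\mathrm{soc}$-points to $\sigma'$.
   Context: $\mathcal C$ is an $\mathbb F$-linear abelian category all of whose objects have finite length. Radical filtration: $\mathrm{rad}^0M=M$, $\mathrm{rad}^nM=\mathrm{rad}(\mathrm{rad}^{n-1}M)$ ($\mathrm{rad}$ = smallest subobject with semisimple quotient); socle filtration: $\mathrm{soc}_{-1}M=0$, $\mathrm{soc}_nM$ = preimage in $M$ of $\mathrm{soc}(M/\mathrm{soc}_{n-1}M)$. For $M$ multiplicity free (each Jordan–Hölder factor occurring once) and $\sigma\in\mathrm{JH}(M)$, $d^M_{\mathrm{rad}}(\sigma)$ is the unique $n$ with $\sigma$ a constituent of $\mathrm{rad}^nM/\mathrm{rad}^{n+1}M$, and $d_M^{\mathrm{soc}}(\sigma)$ the unique $n$ with $\sigma$ a constituent of $\mathrm{soc}_nM/\mathrm{soc}_{n-1}M$. $\sigma$ points to $\sigma'$ if the subquotient of $M$ which is an extension $0\to\sigma'\to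 X\to\sigma\to0$ is nonsplit. Given a filtration $\mathscr F$ (here radical or socle), $\sigma$ $\mathscr F$-points to $\sigma'$ if $\sigma$ points to $\sigma'$ and the filtration induced by $\mathscr F$ on that subquotient $X$ has exactly two nonzero graded pieces. *)

(* Defs.v *)
(* Model: by the standard equivalence (a finite abelian F-linear category is
   equivalent to A-mod for a finite-dimensional F-algebra A), the object M is
   F^n (row vectors 'rV[F]_n) with A acting through a finite family of
   generating operators g i : 'M[F]_n.  Subobjects of M are row spaces of square matrices
   (stable under all g i).  A subquotient is a pair (W, U) with W <= U. *)
From HB Require Import structures.
From mathcomp Require Import all_boot all_order all_algebra.
Set Implicit Arguments. Unset Strict Implicit. Unset Printing Implicit Defensive.
Import GRing.Theory.
Local Open Scope ring_scope.

Section Modules.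
Variables (F : fieldType) (n : nat) (I : finType) (g : I -> 'M[F]_n).

Definition stable (U : 'M[F]_n) : Prop := forall i, (U *m g i <= U)%MS.

Definition subq (W U : 'M[F]_n) : Prop := [/\ stable W, stable U & (W <= U)%MS].

Definition simple_sq (W U : 'M[F]_n) : Prop :=
  [/\ subq W U, (\rank W < \rank U)%N &
      forall V, stable V -> (W <= V)%MS -> (V <= U)%MS ->
                (V == W)%MS \/ (V == U)%MS].

(* U1/W1 and U2/W2 are isomorphic: f induces an A-linear bijection *)
Definition iso_sq (W1 U1 W2 U2 : 'M[F]_n) : Prop :=
  exists f : 'M[F]_n,
    [/\ (U1 *m f <= U2)%MS, (W1 *m f <= W2)%MS,
        forall i, (U1 *m (g i *m f - f *m g i) <= W2)%MS,
        forall v : 'rV[F]_n, (v <= U1)%MS -> (v *m f <= W2)%MS -> (v <= W1)%MS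
      & (U2 <= U1 *m f + W2)%MS].

Definition semisimple_sq (W U : 'M[F]_n) : Prop :=
  forall V, stable V -> (W <= V)%MS -> (V <= U)%MS ->
    exists V', [/\ stable V', (W <= V')%MS, (V' <= U)%MS,
                   (V + V' == U)%MS & (V :&: V' == W)%MS].

Definition is_rad (U R : 'M[F]_n) : Prop :=
  [/\ subq R U, semisimple_sq R U &
      forall V, stable V -> (V <= U)%MS -> semisimple_sq V U -> (R <= V)%MS].

Definition is_soc_over (B S : 'M[F]_n) : Prop :=
  [/\ subq B S, semisimple_sq B S &
      forall V, stable V -> (B <= V)%MS -> semisimple_sq B V -> (V <= S)%MS].

Definition radfilt (Rf : nat -> 'M[F]_n) : Prop :=
  (Rf 0%N == 1%:M)%MS /\ forall k, is_rad (Rf k) (Rf k.+1).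

(* Sf k.+1 = soc_k M, Sf 0 = soc_{-1} M = 0 *)
Definition socfilt (Sf : nat -> 'M[F]_n) : Prop :=
  (Sf 0%N == (0 : 'M[F]_n))%MS /\ forall k, is_soc_over (Sf k) (Sf k.+1).

Definition compseries (k : nat) (s : nat -> 'M[F]_n) : Prop :=
  [/\ (s 0%N == (0 : 'M[F]_n))%MS, (s k == 1%:M)%MS &
      forall i, (i < k)%N -> simple_sq (s i) (s i.+1)].

Definition multfree : Prop :=
  forall k s, compseries k s -> forall i j, (i < j)%N -> (j < k)%N ->
    ~ iso_sq (s i) (s i.+1) (s j) (s j.+1).

Definition drad (Rf : nat -> 'M[F]_n) (W U : 'M[F]_n) (d : nat) : Prop :=
  exists W0 U0, [/\ simple_sq W0 U0, (Rf d.+1 <= W0)%MS, (U0 <= Rf d)%MS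
                  & iso_sq W0 U0 W U].

(* the simple sigma = U/W is a constituent of soc_d M / soc_{d-1} M *)
Definition dsoc (Sf : nat -> 'M[F]_n) (W U : 'M[F]_n) (d : nat) : Prop :=
  exists W0 U0, [/\ simple_sq W0 U0, (Sf d <= W0)%MS, (U0 <= Sf d.+1)%MS
                  & iso_sq W0 U0 W U].

Definition piece_nz (Ff : nat -> 'M[F]_n) (W U : 'M[F]_n) (k : nat) : bool :=
  \rank ((Ff k :&: U) + W)%MS != \rank ((Ff k.+1 :&: U) + W)%MS.

(* sigma = Uq/Wq Ff-points to sigma' = Us/Ws : there is a nonsplit subquotient
   0 -> sigma' -> U/W -> sigma -> 0 of M whose induced Ff-filtration has
   exactly two nonzero graded pieces *)
Definition fpoints (Ff : nat -> 'M[F]_n) (Wq Uq Ws Us : 'M[F]_n) : Prop :=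
  exists W X U,
    [/\ subq W X /\ subq X U, iso_sq W X Ws Us, iso_sq X U Wq Uq,
        (~ exists Y, [/\ subq W Y, (Y <= U)%MS, (X + Y == U)%MS
                                   & (X :&: Y == W)%MS])
      & exists k1 k2, k1 <> k2 /\
          forall k, piece_nz Ff W U k <-> (k = k1 \/ k = k2)].

End Modules.

(* Main.v *)
Require Import Defs.
From mathcomp Require Import all_boot all_order all_algebra.
From Stdlib Require Import Classical.
From mathcomp Require Import zify.
Set Implicit Arguments. Unset Strict Implicit. Unset Printing Implicit Defensive.
Import GRing.Theory.
Local Open Scope ring_scope.

Section Aux.
Variables (F : fieldType) (n : nat) (I : finType) (g : I -> 'M[F]_n).
Implicit Types (A B C D K R S T U V W X Y Z : 'M[F]_n).

Lemma rankP A B : (A <= B)%MS -> (\rank A < \rank B)%N = ~~ (B <= A)%MS.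
Proof. by move=> sAB; rewrite (ltn_leqif (mxrank_leqif_sup sAB)). Qed.

Lemma stable_cap A B : stable g A -> stable g B -> stable g (A :&: B)%MS.
Proof.
move=> sA sB i; rewrite sub_capmx.
by rewrite (submx_trans (submxMr _ (capmxSl _ _)) (sA i)) (submx_trans (submxMr _ (capmxSr _ _)) (sB i)).
Qed.

Lemma stable_adds A B : stable g A -> stable g B -> stable g (A + B)%MS.
Proof.
move=> sA sB i; rewrite addsmxMr addsmx_sub.
by rewrite (submx_trans (sA i) (addsmxSl _ _)) (submx_trans (sB i) (addsmxSr _ _)).
Qed.

Lemma iso_trans W1 U1 W2 U2 W3 U3 :
  iso_sq g W1 U1 W2 U2 -> iso_sq g W2 U2 W3 U3 -> iso_sq g W1 U1 W3 U3.
Proof.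
move=> [f1 [a1 b1 c1 d1 e1]] [f2 [a2 b2 c2 d2 e2]]; exists (f1 *m f2); split.
- by rewrite mulmxA (submx_trans (submxMr _ a1) a2).
- by rewrite mulmxA (submx_trans (submxMr _ b1) b2).
- move=> i.
  have -> : U1 *m (g i *m (f1 *m f2) - f1 *m f2 *m g i) =
    U1 *m (g i *m f1 - f1 *m g i) *m f2 + U1 *m f1 *m (g i *m f2 - f2 *m g i).
    by rewrite !mulmxBr !mulmxBl !mulmxA addrA subrK.
  apply: addmx_sub; first exact: submx_trans (submxMr _ (c1 i)) b2.
  exact: submx_trans (submxMr _ a1) (c2 i).
- move=> v vU1 vf; apply: d1 => //; apply: d2; first by apply: submx_trans (submxMr _ vU1) a1.
  by rewrite -mulmxA.
- apply: submx_trans e2 _; rewrite addsmx_sub addsmxSr andbT.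
  apply: submx_trans (submxMr f2 e1) _; rewrite addsmxMr addsmx_sub.
  by rewrite -mulmxA addsmxSl /= (submx_trans b2 (addsmxSr _ _)).
Qed.

Lemma iso_incl W1 U1 W2 U2 :
  (W1 <= W2)%MS -> (U1 <= U2)%MS -> (U1 :&: W2 <= W1)%MS -> (U2 <= U1 + W2)%MS ->
  iso_sq g W1 U1 W2 U2.
Proof.
move=> a b c e; exists 1%:M; rewrite !mulmx1; split => //.
- by move=> i; rewrite mulmx1 mul1mx subrr mulmx0 sub0mx.
- by move=> v vU; rewrite mulmx1 => vW; apply: submx_trans c; rewrite sub_capmx vU.
Qed.

Lemma iso_refl W1 U1 : iso_sq g W1 U1 W1 U1.
Proof.
apply: iso_incl => //; [exact: capmxSr | exact: addsmxSl].
Qed.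

Lemma iso_proj W0 U0 C X :
  stable g W0 -> stable g U0 -> stable g C -> (W0 <= C)%MS -> (U0 :&: C <= W0)%MS ->
  (C <= X)%MS -> (U0 <= X)%MS -> (X <= U0 + C)%MS ->
  iso_sq g C X W0 U0.
Proof.
move=> sW sU sC WC UC CX UX XUC.
set D := (C :\: U0)%MS.
have dx : (U0 :&: D = 0)%MS by rewrite capmxC capmx_diff.
have DC : (D <= C)%MS by exact: diffmxSl.
have CDU : (C <= D + C :&: U0)%MS by rewrite (addsmx_diff_cap_eq C U0).
have XUD : (X <= U0 + D)%MS.
  apply: submx_trans XUC _; rewrite addsmx_sub addsmxSl /=.
  apply: submx_trans CDU _; rewrite addsmx_sub addsmxSr /=.
  exact: submx_trans (capmxSr _ _) (addsmxSl _ _).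
pose f := proj_mx U0 D.
have fsub : forall m (A : 'M_(m, n)), (A *m f <= U0)%MS by move=> m A; apply: proj_mx_sub.
have fid : forall m (A : 'M_(m, n)), (A <= U0)%MS -> A *m f = A by move=> m A; apply: proj_mx_id.
have f0 : forall m (A : 'M_(m, n)), (A <= D)%MS -> A *m f = 0 by move=> m A; apply: proj_mx_0.
have fc : forall m (A : 'M_(m, n)), (A <= U0 + D)%MS -> (A - A *m f <= D)%MS
  by move=> m A; apply: proj_mx_compl_sub.
clearbody f.
have Cf : (C *m f <= W0)%MS.
  apply: submx_trans (submxMr _ CDU) _; rewrite addsmxMr addsmx_sub.
  rewrite f0 // sub0mx /= fid ?capmxSr //.
  by rewrite capmxC.
exists f; split => //.
- move=> i; apply: submx_trans (submxMr _ XUC) _; rewrite addsmxMr addsmx_sub.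
  apply/andP; split.
    by rewrite mulmxBr !mulmxA fid // fid // subrr sub0mx.
  rewrite mulmxBr !mulmxA addmx_sub //.
    exact: submx_trans (submxMr _ (sC i)) Cf.
  rewrite eqmx_opp.
  apply: submx_trans (submxMr _ Cf) _.
  exact: sW i.
- move=> v vX vf; rewrite -(subrK (v *m f) v) addmx_sub //.
    exact: submx_trans (fc _ _ (submx_trans vX XUD)) DC.
  exact: submx_trans vf WC.
- by rewrite -{1}(fid _ U0) // addsmxC (submx_trans _ (addsmxSr _ _)) // submxMr.
Qed.

Lemma simple_semisimple W0 U0 : simple_sq g W0 U0 -> semisimple_sq g W0 U0.
Proof.
move=> [[sW sU WU] _ sim] V sV WV VU.
case: (sim V sV WV VU) => /andP [V1 V2].
- exists U0; split => //.
    by rewrite addsmx_sub VU submx_refl addsmxSr.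
  by rewrite sub_capmx WV WU andbT (submx_trans (capmxSl _ _) V1).
- exists W0; split => //.
    by rewrite addsmx_sub VU WU (submx_trans V2 (addsmxSl _ _)).
  by rewrite capmxSr sub_capmx WV submx_refl.
Qed.

Lemma simple_glue W0 U0 C X :
  simple_sq g W0 U0 -> stable g C -> stable g X -> (C <= X)%MS ->
  (X <= U0 + C)%MS -> (U0 <= X)%MS -> (U0 :&: C <= W0)%MS -> (W0 <= C)%MS ->
  simple_sq g C X.
Proof.
move=> [[sW sU WU] rk sim] sC sX CX XUC UX UC WC; split => //.
  rewrite rankP //; apply/negP => XC.
  move: rk; rewrite rankP // => /negP; apply.
  by apply: submx_trans UC; rewrite sub_capmx submx_refl (submx_trans UX XC).
move=> V sV CV VX.
have sVU := stable_cap sV sU.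
case: (sim _ sVU) => [||/andP[V1 V2]|/andP[V1 V2]].
- by rewrite sub_capmx WU (submx_trans WC CV).
- exact: capmxSr.
- left; rewrite CV andbT.
  have : (V <= (C + U0) :&: V)%MS by rewrite sub_capmx submx_refl andbT addsmxC (submx_trans VX XUC).
  rewrite -matrix_modl // => H; apply: submx_trans H _; rewrite addsmx_sub submx_refl /=.
  by rewrite capmxC (submx_trans V1 WC).
- right; rewrite VX /=; apply: submx_trans XUC _.
  by rewrite addsmx_sub CV (submx_trans V2 (capmxSl _ _)).
Qed.

Lemma simple_cut W0 U0 B T :
  simple_sq g W0 U0 -> stable g B -> stable g T -> (B <= T)%MS ->
  (T <= U0)%MS -> (U0 <= T + W0)%MS -> (T :&: W0 <= B)%MS -> (B <= W0)%MS ->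
  simple_sq g B T.
Proof.
move=> [[sW sU WU] rk sim] sB sT BT TU UTW TW BW; split => //.
  rewrite rankP //; apply/negP => TB.
  move: rk; rewrite rankP // => /negP; apply.
  apply: submx_trans UTW _; rewrite addsmx_sub submx_refl andbT.
  exact: submx_trans TB BW.
move=> V sV BV VT.
have sVW := stable_adds sV sW.
case: (sim _ sVW) => [||/andP[V1 V2]|/andP[V1 V2]].
- exact: addsmxSr.
- by rewrite addsmx_sub WU (submx_trans VT TU).
- left; rewrite BV andbT; apply: submx_trans TW.
  by rewrite sub_capmx VT (submx_trans (addsmxSl _ _) V1).
- right; rewrite VT /=.
  have : (T <= (V + W0) :&: T)%MS.
    by rewrite sub_capmx submx_refl andbT (submx_trans TU V2).
  rewrite -matrix_modl // => H.
  apply: submx_trans H _; rewrite addsmx_sub submx_refl /=.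
  by rewrite capmxC (submx_trans TW BV).
Qed.

Lemma not_simple W0 U0 : Defs.subq g W0 U0 -> (\rank W0 < \rank U0)%N ->
  ~ simple_sq g W0 U0 ->
  exists V, [/\ stable g V, (W0 <= V)%MS, (V <= U0)%MS,
                (\rank W0 < \rank V)%N & (\rank V < \rank U0)%N].
Proof.
move=> [sW sU WU] rk nS; apply: NNPP => H; apply: nS; split => //.
move=> V sV WV VU; apply: NNPP => nn; apply: H; exists V; split => //.
  rewrite rankP //; apply/negP => VW; apply: nn; left; by rewrite VW WV.
rewrite rankP //; apply/negP => UV; apply: nn; right; by rewrite UV VU.
Qed.

Lemma min_simple k R Z : (\rank Z <= k)%N -> stable g R -> stable g Z ->
  (R <= Z)%MS -> (\rank R < \rank Z)%N ->
  exists A, [/\ stable g A, (R <= A)%MS, (A <= Z)%MS & simple_sq g R A].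
Proof.
elim: k Z => [|k IH] Z kZ sR sZ RZ rk; first by move: rk; rewrite ltnNge (leq_trans kZ).
case: (classic (simple_sq g R Z)) => [S|nS]; first by exists Z; split.
have [V [sV RV VZ rV rVZ]] := not_simple (And3 sR sZ RZ) rk nS.
have [A [sA RA AV SA]] := IH V (leq_trans rVZ kZ) sR sV RV rV.
by exists A; split => //; apply: submx_trans VZ.
Qed.

Lemma max_simple k K S : (\rank S - \rank K <= k)%N -> stable g K -> stable g S ->
  (K <= S)%MS -> (\rank K < \rank S)%N ->
  exists B, [/\ stable g B, (K <= B)%MS, (B <= S)%MS & simple_sq g B S].
Proof.
elim: k K => [|k IH] K kK sK sS KS rk.
  by move: kK; rewrite leqn0 subn_eq0 leqNgt rk.
case: (classic (simple_sq g K S)) => [Sm|nS]; first by exists K; split.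
have [V [sV KV VS rV rVS]] := not_simple (And3 sK sS KS) rk nS.
have kV : (\rank S - \rank V <= k)%N.
  rewrite -ltnS; apply: leq_trans kK; rewrite ltn_sub2l //.
have [B [sB VB BS SB]] := IH V kV sV sS VS rVS.
by exists B; split => //; apply: submx_trans VB.
Qed.

Section RadStep.
Variables (Rd R1 C : 'M[F]_n).
Hypotheses (sRd : stable g Rd) (sR1 : stable g R1) (sC : stable g C)
  (CR1 : (C <= R1)%MS) (R1Rd : (R1 <= Rd)%MS) (ssR : semisimple_sq g R1 Rd)
  (minR : forall V, stable g V -> (V <= Rd)%MS -> semisimple_sq g V Rd -> (R1 <= V)%MS)
  (simC : simple_sq g C R1).

Definition rad_goal := exists A, [/\ simple_sq g R1 A, (A <= Rd)%MS &
  ~ exists Y, [/\ Defs.subq g C Y, (Y <= A)%MS, (R1 + Y == A)%MS & (R1 :&: Y == C)%MS]].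

Definition PY Y := [/\ stable g Y, (C <= Y)%MS, (Y <= Rd)%MS & (Y :&: R1 <= C)%MS].

Lemma rad_step1 Y : PY Y -> (forall Y', PY Y' -> (\rank Y < \rank Y')%N -> rad_goal) ->
  rad_goal.
Proof.
move=> [sY CY YRd YR1] IH.
have nR1C : ~~ (R1 <= C)%MS by case: simC => [[_ _ _]]; rewrite rankP.
have [RdYR|nRdYR] := boolP (Rd <= Y + R1)%MS.
  have SY : simple_sq g Y Rd.
    apply: simple_glue simC sY sRd YRd _ R1Rd _ CY; first by rewrite addsmxC.
    by rewrite capmxC.
  have := minR sY YRd (simple_semisimple SY) => R1Y.
  by case/negP: nR1C; apply: submx_trans YR1; rewrite sub_capmx R1Y submx_refl.
have YRRd : (Y + R1 <= Rd)%MS by rewrite addsmx_sub YRd R1Rd.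
have [Z [sZ R1Z ZRd /andP[_ eqS] /andP[eqC _]]] :=
  ssR (stable_adds sY sR1) (addsmxSr _ _) YRRd.
have rZ : (\rank R1 < \rank Z)%N.
  rewrite rankP //; apply/negP => ZR1; case/negP: nRdYR.
  apply: submx_trans eqS _; rewrite addsmx_sub submx_refl /=.
  exact: submx_trans ZR1 (addsmxSr _ _).
have [A [sA R1A AZ SA]] := min_simple (rank_leq_col Z) sR1 sZ R1Z rZ.
have ARd := submx_trans AZ ZRd.
case: (classic (exists Y0, [/\ Defs.subq g C Y0, (Y0 <= A)%MS, (R1 + Y0 == A)%MS
   & (R1 :&: Y0 == C)%MS])) => [[YA [[_ sYA CYA] YAA /andP[_ eq1] /andP[eq2 _]]]|nsp];
  last by exists A; split.
have nAR1 : ~~ (A <= R1)%MS by case: SA => _; rewrite rankP.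
apply: (IH (Y + YA)%MS).
  split.
  - exact: stable_adds.
  - exact: submx_trans CY (addsmxSl _ _).
  - by rewrite addsmx_sub YRd (submx_trans YAA ARd).
  - apply: submx_trans YR1; rewrite sub_capmx capmxSr andbT.
    have H1 : ((Y + YA) :&: R1 <= (Y + YA) :&: (Y + R1))%MS.
      by apply: capmxS => //; apply: addsmxSr.
    apply: submx_trans H1 _; rewrite -matrix_modl ?addsmxSl //.
    rewrite addsmx_sub submx_refl /=.
    have H2 : (YA :&: (Y + R1) <= R1)%MS.
      apply: submx_trans eqC; rewrite capmxC; apply: capmxS => //.
      exact: submx_trans YAA AZ.
    apply: submx_trans CY; apply: submx_trans eq2.
    by rewrite sub_capmx H2 capmxSl.
rewrite rankP ?addsmxSl //; apply/negP => H; case/negP: nAR1.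
have YAY : (YA <= Y)%MS by apply: submx_trans H; apply: addsmxSr.
apply: submx_trans eqC; rewrite sub_capmx AZ andbT.
apply: submx_trans eq1 _; rewrite addsmx_sub addsmxSr /=.
exact: submx_trans YAY (addsmxSl _ _).
Qed.

Lemma rad_ex : rad_goal.
Proof.
suff H : forall k Y, (n - \rank Y <= k)%N -> PY Y -> rad_goal.
  apply: (H n C); first exact: leq_subr.
  by split; rewrite ?capmxSl ?submx_refl ?(submx_trans CR1 R1Rd).
elim=> [|k IH] Y kY PYY; apply: (rad_step1 PYY) => Y' PY' rk.
  by move: (rank_leq_col Y'); rewrite leqNgt (leq_trans _ rk) // -subn_eq0 -leqn0.
apply: (IH Y') => //.
have := rank_leq_col Y'; move: kY rk; rewrite -!subn_eq0; lia.
Qed.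

End RadStep.

Section SocStep.
Variables (S0 S1 Uu : 'M[F]_n).
Hypotheses (sS0 : stable g S0) (sS1 : stable g S1) (sUu : stable g Uu)
  (S0S1 : (S0 <= S1)%MS) (S1U : (S1 <= Uu)%MS) (ssS : semisimple_sq g S0 S1)
  (maxS : forall V, stable g V -> (S0 <= V)%MS -> semisimple_sq g S0 V -> (V <= S1)%MS)
  (simU : simple_sq g S1 Uu).

Definition soc_goal := exists B, [/\ simple_sq g B S1, (S0 <= B)%MS &
  ~ exists Y, [/\ Defs.subq g B Y, (Y <= Uu)%MS, (S1 + Y == Uu)%MS & (S1 :&: Y == B)%MS]].

Definition PT T := [/\ stable g T, (S0 <= T)%MS, (T <= Uu)%MS & (Uu <= T + S1)%MS].

Lemma soc_step1 T : PT T -> (forall T', PT T' -> (\rank T' < \rank T)%N -> soc_goal) ->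
  soc_goal.
Proof.
move=> [sT S0T TU UTS] IH.
have nUS1 : ~~ (Uu <= S1)%MS by case: simU => [[_ _ _]]; rewrite rankP.
have [TS0|nTS0] := boolP (T :&: S1 <= S0)%MS.
  have ST : simple_sq g S0 T by apply: simple_cut simU sS0 sT S0T TU UTS TS0 S0S1.
  have := maxS sT S0T (simple_semisimple ST) => TS1.
  case/negP: nUS1; apply: submx_trans UTS _.
  by rewrite addsmx_sub TS1 submx_refl.
have sTS := stable_cap sT sS1.
have S0TS : (S0 <= T :&: S1)%MS by rewrite sub_capmx S0T S0S1.
have [K [sK S0K KS1 /andP[_ eqS] /andP[eqC _]]] := ssS sTS S0TS (capmxSr _ _).
have rK : (\rank K < \rank S1)%N.
  rewrite rankP //; apply/negP => S1K; case/negP: nTS0.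
  apply: submx_trans eqC; rewrite sub_capmx submx_refl /=.
  exact: submx_trans (capmxSr _ _) S1K.
have [B [sB KB BS1 SB]] := max_simple (leqnn _) sK sS1 KS1 rK.
case: (classic (exists Y0, [/\ Defs.subq g B Y0, (Y0 <= Uu)%MS, (S1 + Y0 == Uu)%MS
   & (S1 :&: Y0 == B)%MS])) => [[YB [[_ sYB BYB] YBU /andP[_ eq1] /andP[eq2 _]]]|nsp];
  last by exists B; split => //; apply: submx_trans KB.
have nS1B : ~~ (S1 <= B)%MS by case: SB => _; rewrite rankP.
have KYB := submx_trans KB BYB.
apply: (IH (T :&: YB)%MS).
  split.
  - exact: stable_cap.
  - by rewrite sub_capmx S0T (submx_trans S0K KYB).
  - exact: submx_trans (capmxSl _ _) TU.
  - apply: submx_trans UTS _; rewrite addsmx_sub addsmxSr andbT.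
    have H : (T <= (T :&: S1 + YB) :&: T)%MS.
      rewrite sub_capmx submx_refl andbT; apply: submx_trans TU _.
      apply: submx_trans eq1 _; rewrite addsmx_sub addsmxSr andbT.
      apply: submx_trans eqS _; rewrite addsmx_sub addsmxSl /=.
      exact: submx_trans KYB (addsmxSr _ _).
    apply: submx_trans H _; rewrite -matrix_modl ?capmxSl //.
    by rewrite addsmxC; apply: addsmxS; rewrite ?capmxSr // capmxC.
rewrite rankP ?capmxSl //; apply/negP => H; case/negP: nS1B.
have TYB : (T <= YB)%MS by apply: submx_trans H (capmxSr _ _).
apply: submx_trans eqS _; rewrite addsmx_sub KB andbT.
apply: submx_trans eq2; rewrite capmxC; exact: capmxS (submx_refl S1) TYB.
Qed.

Lemma soc_ex : soc_goal.
Proof.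
suff H : forall k T, (\rank T <= k)%N -> PT T -> soc_goal.
  apply: (H n Uu); first exact: rank_leq_col.
  by split; rewrite ?submx_refl ?addsmxSl ?(submx_trans S0S1 S1U).
elim=> [|k IH] T kT PTT; apply: (soc_step1 PTT) => T' PT' rk.
  by move: kT; rewrite leqn0 => /eqP rT; rewrite rT in rk.
apply: (IH T') => //; lia.
Qed.

End SocStep.

Lemma mono_up (f : nat -> 'M[F]_n) : (forall k, (f k <= f k.+1)%MS) ->
  forall i j, (i <= j)%N -> (f i <= f j)%MS.
Proof.
move=> h i; elim=> [|j IH]; first by rewrite leqn0 => /eqP ->.
rewrite leq_eqVlt => /orP [/eqP -> //|]; rewrite ltnS => /IH H.
exact: submx_trans H (h j).
Qed.

Lemma mono_dn (f : nat -> 'M[F]_n) : (forall k, (f k.+1 <= f k)%MS) ->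
  forall i j, (i <= j)%N -> (f j <= f i)%MS.
Proof.
move=> h i; elim=> [|j IH]; first by rewrite leqn0 => /eqP ->.
rewrite leq_eqVlt => /orP [/eqP -> //|]; rewrite ltnS => /IH H.
exact: submx_trans (h j) H.
Qed.

End Aux.

Lemma pieces (r : nat -> nat) d a b c : a <> b -> b <> c ->
  (forall k, (k <= d)%N -> r k = a) -> r d.+1 = b ->
  (forall k, (d.+2 <= k)%N -> r k = c) ->
  forall k, (r k != r k.+1) <-> (k = d \/ k = d.+1).
Proof.
move=> ab bc ha hb hc k.
case: (ltngtP k d) => [kd|dk|->].
- have h1 : r k = a by apply: ha; lia.
  have h2 : r k.+1 = a by apply: ha; lia.
  rewrite h1 h2 eqxx; split; [by [] | case=> E; lia].
- case: (ltngtP k d.+1) => [k1|k1|->].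
  + lia.
  + have h1 : r k = c by apply: hc; lia.
    have h2 : r k.+1 = c by apply: hc; lia.
    rewrite h1 h2 eqxx; split; [by [] | case=> E; lia].
  + have h2 : r d.+2 = c by apply: hc.
    rewrite hb h2; split => _; [by right | by apply/eqP].
- have h1 : r d = a by apply: ha.
  rewrite h1 hb; split => _; [by left | by apply/eqP].
Qed.

Theorem lemma4p3 (F : fieldType) (n : nat) (I : finType) (g : I -> 'M[F]_n)
    (Rf Sf : nat -> 'M[F]_n) (W U : 'M[F]_n) :
  multfree g -> radfilt g Rf -> socfilt g Sf -> simple_sq g W U ->
  (forall d, drad g Rf W U d.+1 ->
     exists W' U', [/\ simple_sq g W' U', drad g Rf W' U' d
                     & fpoints g Rf W' U' W U]) /\
  (forall d, dsoc g Sf W U d.+1 ->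
     exists W' U', [/\ simple_sq g W' U', dsoc g Sf W' U' d
                     & fpoints g Sf W U W' U']).
Proof.
move=> _ [_ hR] [_ hS] _; split.
- move=> d [W0 [U0 [SW0 R2W0 U0R1 iso0]]].
  have stR : forall k, stable g (Rf k) by move=> k; case: (hR k) => -[].
  have decR : forall k, (Rf k.+1 <= Rf k)%MS by move=> k; case: (hR k) => -[].
  have [[sW0 sU0 W0U0] _ _] := SW0.
  have R2U0 := submx_trans R2W0 W0U0.
  have [_ ssR2 _] := hR d.+1.
  have [V' [sV' R2V' V'R1 /andP[_ eqS] /andP[eqC _]]] := ssR2 U0 sU0 R2U0 U0R1.
  pose C := (W0 + V')%MS.
  have sC : stable g C by apply: stable_adds.
  have W0C : (W0 <= C)%MS by apply: addsmxSl.
  have CR1 : (C <= Rf d.+1)%MS by rewrite addsmx_sub V'R1 (submx_trans W0U0 U0R1).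
  have R2C : (Rf d.+2 <= C)%MS by apply: submx_trans R2V' (addsmxSr _ _).
  have UC : (U0 :&: C <= W0)%MS.
    rewrite capmxC -matrix_modl // addsmx_sub submx_refl /=.
    by rewrite capmxC (submx_trans eqC R2W0).
  have R1UC : (Rf d.+1 <= U0 + C)%MS.
    by apply: submx_trans eqS _; apply: addsmxS => //; apply: addsmxSr.
  have simC : simple_sq g C (Rf d.+1) := simple_glue SW0 sC (stR _) CR1 R1UC U0R1 UC W0C.
  have [_ ssR minR] := hR d.
  have [A [SA ARd nsp]] := rad_ex (stR d) (stR d.+1) sC CR1 (decR d) ssR minR simC.
  have [[_ sA R1A] rA _] := SA.
  have [_ rC _] := simC.
  exists (Rf d.+1), A; split => //.
    by exists (Rf d.+1), A; split => //; apply: iso_refl.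
  exists C, (Rf d.+1), A; split => //.
  + apply: iso_trans iso0.
    exact: iso_proj sW0 sU0 sC W0C UC CR1 U0R1 R1UC.
  + exact: iso_refl.
  + exists d, d.+1; split; first exact: n_Sn.
    rewrite /piece_nz.
    apply: (pieces (a := \rank A) (b := \rank (Rf d.+1)) (c := \rank C)).
    * by move=> E; rewrite E ltnn in rA.
    * by move=> E; rewrite E ltnn in rC.
    * move=> k kd; apply: eqmx_rank; apply/andP; split.
        by rewrite addsmx_sub capmxSr (submx_trans CR1 R1A).
      apply: submx_trans (addsmxSl _ _); rewrite sub_capmx submx_refl andbT.
      exact: submx_trans ARd (mono_dn decR kd).
    * apply: eqmx_rank; apply/andP; split.
        by rewrite addsmx_sub capmxSl CR1.
      by apply: submx_trans (addsmxSl _ _); rewrite sub_capmx submx_refl R1A.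
    * move=> k kd; apply: eqmx_rank; apply/andP; split.
        rewrite addsmx_sub submx_refl andbT.
        exact: submx_trans (capmxSl _ _) (submx_trans (mono_dn decR kd) R2C).
      exact: addsmxSr.
- move=> d [W0 [U0 [SW0 S1W0 U0S2 iso0]]].
  have stS : forall k, stable g (Sf k) by move=> k; case: (hS k) => -[].
  have incS : forall k, (Sf k <= Sf k.+1)%MS by move=> k; case: (hS k) => -[].
  have [[sW0 sU0 W0U0] _ _] := SW0.
  have [_ ssS2 _] := hS d.+1.
  have W0S2 := submx_trans W0U0 U0S2.
  have [V' [sV' S1V' V'S2 /andP[_ eqS] /andP[eqC _]]] := ssS2 W0 sW0 S1W0 W0S2.
  pose Uu := (V' :&: U0)%MS.
  have sUu : stable g Uu by apply: stable_cap.
  have S1Uu : (Sf d.+1 <= Uu)%MS by rewrite sub_capmx S1V' (submx_trans S1W0 W0U0).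
  have UuU0 : (Uu <= U0)%MS by apply: capmxSr.
  have UuW0 : (Uu :&: W0 <= Sf d.+1)%MS.
    apply: submx_trans eqC; rewrite sub_capmx capmxSr /=.
    exact: submx_trans (capmxSl _ _) (capmxSl _ _).
  have U0UW : (U0 <= Uu + W0)%MS.
    have H : (U0 <= (W0 + V') :&: U0)%MS.
      by rewrite sub_capmx submx_refl andbT (submx_trans U0S2 eqS).
    apply: submx_trans H _; rewrite -matrix_modl // addsmxC.
    exact: submx_refl.
  have simU : simple_sq g (Sf d.+1) Uu :=
    simple_cut SW0 (stS _) sUu S1Uu UuU0 U0UW UuW0 S1W0.
  have [_ ssS maxS] := hS d.
  have [B [SB S0B nsp]] := soc_ex (stS d) (stS d.+1) sUu (incS d) S1Uu ssS maxS simU.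
  have [[sB _ BS1] rB _] := SB.
  have [_ rU _] := simU.
  exists B, (Sf d.+1); split => //.
    by exists B, (Sf d.+1); split => //; apply: iso_refl.
  exists B, (Sf d.+1), Uu; split => //.
  + exact: iso_refl.
  + exact: iso_trans (iso_incl g S1W0 UuU0 UuW0 U0UW) iso0.
  + exists d, d.+1; split; first exact: n_Sn.
    rewrite /piece_nz.
    apply: (pieces (a := \rank B) (b := \rank (Sf d.+1)) (c := \rank Uu)).
    * by move=> E; rewrite E ltnn in rB.
    * by move=> E; rewrite E ltnn in rU.
    * move=> k kd; apply: eqmx_rank; apply/andP; split.
        rewrite addsmx_sub submx_refl andbT.
        exact: submx_trans (capmxSl _ _) (submx_trans (mono_up incS kd) S0B).
      exact: addsmxSr.
    * apply: eqmx_rank; apply/andP; split.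
        by rewrite addsmx_sub capmxSl BS1.
      by apply: submx_trans (addsmxSl _ _); rewrite sub_capmx submx_refl S1Uu.
    * move=> k kd; apply: eqmx_rank; apply/andP; split.
        by rewrite addsmx_sub capmxSr (submx_trans BS1 S1Uu).
      apply: submx_trans (addsmxSl _ _); rewrite sub_capmx submx_refl andbT.
      exact: submx_trans UuU0 (submx_trans U0S2 (mono_up incS kd)).
Qed.
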